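(* In the hierarchical partition construction described in the context, with $|V|=n$, the number of distinct sets occurring in the partitions $\mathcal S_0,\mathcal S_1,\ldots$ is at most $2n-1$, and the number of unordered pairs $\{A,B\}$ of distinct such sets for which there is a level $j$ with $A,B\in\mathcal S_j$ and $A$ knows $B$ at level $j$ is at most $(2n-1)\lambda^{3+\eta}$.
   Context: Let $(V,d)$ be a finite metric space with $|V|=n\ge 2$ which is doubling with constant $\lambda$: for every $v\in V$ and $r>0$ the open ball $B_{2r}(v)=\{u:d(u,v)<2r\}$ is contained in the union of at most $\lambda$ open balls $B_r(w)$, $w\in V$. Fix an integer $\eta\ge2$ and a real $\tau$ with $1+\frac{1}{2^{\eta-1}-1}\le\tau\le 2^{\eta}$. For $L\subseteq V$ and $r>0$, a greedy partition of $L$ with parameter $r$ is obtained by: set $L_0=L$; while $L_i\ne\emptyset$ choose any $v_i\in L_i$, let $P_i=\{u\in L_i: d(u,v_i)<2^{-\eta-1}r\}$ with leader $v_i$, and set $L_{i+1}=L_i\setminus P_i$. Hierarchical partition construction: choose $r_0$ with $0<r_0<\min_{u\ne v}d(u,v)$ and put $r_j=\tau^j r_0$. Let $\mathcal S_0=\{\{v\}:v\in V\}$, the leader of $\{v\}$ being $v$. While $\mathcal S_j$ has more than one element: let $L_j$ be the set of leaders of the sets in $\mathcal S_j$, let $\mathcal S'_{j+1}$ be a greedy partition of $L_j$ with parameter $2r_{j+1}$, and let $\mathcal S_{j+1}$ consist, for each $P\in\mathcal S'_{j+1}$, of the set $\bigcup\{S\in\mathcal S_j:\mathrm{leader}(S)\in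 P\}$, whose leader is defined to be the leader of $P$. Each $\mathcal S_j$ is a partition of $V$. For $S,S'\in\mathcal S_j$, $S$ knows $S'$ (at level $j$) if there are $v\in S$, $u\in S'$ with $d(v,u)<r_j$. *)

(* Defs.v *)
From HB Require Import structures.
From mathcomp Require Import all_boot all_order all_algebra.
Set Implicit Arguments. Unset Strict Implicit. Unset Printing Implicit Defensive.
Import Order.TTheory GRing.Theory Num.Theory.
Local Open Scope ring_scope.

Section Defs.
Variables (R : realFieldType) (V : finType) (d : V -> V -> R).

Definition is_metric : Prop :=
  [/\ forall x, d x x = 0,
      forall x y, d x y = 0 -> x = y,
      forall x y, d x y = d y x
    & forall x y z, d x z <= d x y + d y z].

Definition ball (r : R) (v : V) : {set V} := [set u | d u v < r].

Definition doubling (lam : nat) : Prop :=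
  forall (v : V) (r : R), 0 < r ->
    exists W : {set V}, (#|W| <= lam)%N /\
      ball (2 * r) v \subset \bigcup_(w in W) ball r w.

(* A run of the greedy partition of L with ball radius rad
   (rad = 2^{-eta-1} * parameter): the list of (leader v_i, part P_i). *)
Fixpoint greedy_run (rad : R) (L : {set V}) (s : seq (V * {set V})) : Prop :=
  match s with
  | [::] => L = set0
  | (v, P) :: s' =>
      [/\ v \in L, P = [set u in L | d u v < rad] & greedy_run rad (L :\: P) s']
  end.

(* a level S_j: list of (leader, set) *)
Definition leaders (S : seq (V * {set V})) : {set V} :=
  [set v | v \in [seq x.1 | x <- S]].

Definition level_sets (S : seq (V * {set V})) : {set {set V}} :=
  [set A | A \in [seq x.2 | x <- S]].

Definition hier_step (eta : nat) (p : R) (S S' : seq (V * {set V})) : Prop :=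
  exists G : seq (V * {set V}),
    greedy_run (p / 2 ^+ eta.+1) (leaders S) G /\
    S' = [seq (x.1, \bigcup_(y <- S | y.1 \in x.2) y.2) | x : V * {set V} <- G].

Definition radius (tau r0 : R) (j : nat) : R := tau ^+ j * r0.

(* H = [:: S_0; S_1; ...; S_m] is a complete run of the hierarchical
   partition construction with parameters eta, tau, r0 *)
Definition hier_run (eta : nat) (tau r0 : R) (H : seq (seq (V * {set V}))) : Prop :=
  [/\ (0 < size H)%N,
      nth [::] H 0 = [seq (v, [set v]) | v <- enum V],
      forall j, (j.+1 < size H)%N ->
        (1 < size (nth [::] H j))%N /\
        hier_step eta (2 * radius tau r0 j.+1) (nth [::] H j) (nth [::] H j.+1)
    & size (nth [::] H (size H).-1) = 1%N].

Definition all_sets (H : seq (seq (V * {set V}))) : {set {set V}} :=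
  \bigcup_(j < size H) level_sets (nth [::] H j).

Definition knows (r : R) (A B : {set V}) : bool :=
  [exists v in A, exists u in B, d v u < r].

Definition knowing_pairs (tau r0 : R) (H : seq (seq (V * {set V})))
  : {set {set {set V}}} :=
  [set AB | [exists A : {set V}, exists B : {set V},
     [&& A != B, AB == [set A; B] &
         has (fun j => [&& A \in level_sets (nth [::] H j),
                           B \in level_sets (nth [::] H j) &
                           knows (radius tau r0 j) A B]) (iota 0 (size H))]]].

End Defs.

(* Main.v *)
Require Import Defs.
From HB Require Import structures.
From mathcomp Require Import all_boot all_order all_algebra.
Set Implicit Arguments. Unset Strict Implicit. Unset Printing Implicit Defensive.
Import Order.TTheory GRing.Theory Num.Theory.
Local Open Scope ring_scope.

Lemma card_bigcup_le (I T : finType) (P : pred I) (F : I -> {set T}) :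
  (#|\bigcup_(i | P i) F i| <= \sum_(i | P i) #|F i|)%N.
Proof.
elim/big_rec2: _ => [|i X n _ IH]; first by rewrite cards0.
by apply: leq_trans (leq_card_setU _ _).1 _; rewrite leq_add2l.
Qed.

Section G.
Variables (R : realFieldType) (V : finType) (d : V -> V -> R).
Hypothesis dm : is_metric d.

Lemma d_sym x y : d x y = d y x.
Proof. by case: dm. Qed.
Lemma d_refl x : d x x = 0.
Proof. by case: dm. Qed.
Lemma d_tri x y z : d x z <= d x y + d y z.
Proof. by case: dm. Qed.

Lemma greedy_props rad L G : 0 < rad -> greedy_run d rad L G ->
  [/\ uniq (map fst G),
      forall x : V * {set V}, x \in G -> [/\ x.1 \in x.2, x.2 \subset L & forall u, u \in x.2 -> d u x.1 < rad],
      forall (x y : V * {set V}) u, x \in G -> y \in G -> u \in x.2 -> u \in y.2 -> x = y,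
      (forall u, u \in L -> exists2 x : V * {set V}, x \in G & u \in x.2) &
      [/\ forall x y : V * {set V}, x \in G -> y \in G -> x != y -> rad <= d x.1 y.1,
          #|L| = sumn (map (fun x : V * {set V} => #|x.2|) G) &
          forall x : V * {set V}, x \in G -> x.1 \in L]].
Proof.
move=> rpos; elim: G L => [|[v P] G IH] L /=.
  move=> ->; split=> //; first by move=> u; rewrite inE.
  by split=> //; rewrite cards0.
case=> vL defP /IH [U1 U2 U3 U4 [U5 U6 U7]].
have PL : P \subset L by rewrite defP; apply/subsetP=> u; rewrite inE => /andP[].
have vP : v \in P by rewrite defP inE vL /= d_refl.
have notP x : x \in G -> (x.1 \in P) = false.
  by move=> /U7; rewrite inE => /andP[/negbTE -> _].
have notP' x u : x \in G -> u \in x.2 -> (u \in P) = false.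
  by move=> xG ux; case: (U2 x xG) => _ /subsetP /(_ u ux); rewrite inE => /andP[/negbTE -> _].
split.
- rewrite U1 andbT; apply/negP => vin.
  have [x xG ex] : exists2 x, x \in G & v = x.1 by apply/mapP.
  by move: (notP x xG); rewrite -ex vP.
- move=> x; rewrite inE => /orP[/eqP -> /=|xG].
    split=> //; by move=> u; rewrite defP inE => /andP[].
  case: (U2 x xG) => a b c; split=> //; apply: subset_trans b _; exact: subsetDl.
- move=> x y u; rewrite !inE => /orP[/eqP->|xG] /orP[/eqP->|yG] //=.
  + by move=> uP uy; move: (notP' y u yG uy); rewrite uP.
  + by move=> ux uP; move: (notP' x u xG ux); rewrite uP.
  + exact: U3.
- move=> u uL; case uP: (u \in P); first by exists (v, P); rewrite ?inE ?eqxx.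
  have : u \in L :\: P by rewrite inE uP uL.
  by case/U4 => x xG ux; exists x; rewrite // inE xG orbT.
split.
- have key x : x \in G -> rad <= d v x.1.
    move=> xG; have := notP x xG; rewrite defP inE (subsetP (subsetDl L P) _ (U7 x xG)) /=.
    by rewrite d_sym => /negbT; rewrite -leNgt.
  move=> x y; rewrite !inE => /orP[/eqP->|xG] /orP[/eqP->|yG] //=.
  + by rewrite eqxx.
  + by move=> _; apply: key.
  + by move=> _; rewrite d_sym; apply: key.
  + exact: U5.
- by rewrite -U6 -(cardsID P L) (setIidPr PL).
- by move=> x; rewrite inE => /orP[/eqP->//|/U7]; rewrite inE => /andP[].
Qed.

Lemma memU (S : seq (V * {set V})) (P : {set V}) u :
  reflect (exists2 y, y \in S & (y.1 \in P) && (u \in y.2))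
          (u \in \bigcup_(y <- S | y.1 \in P) y.2).
Proof.
elim: S => [|y S IH]; first by rewrite big_nil inE; constructor => -[y].
rewrite big_cons; case: ifP => yP.
  rewrite inE; apply: (iffP orP) => [[uy|/IH [z zS zz]]|[z]].
  - by exists y; rewrite ?inE ?eqxx ?yP.
  - by exists z; rewrite // inE zS orbT.
  - rewrite inE => /orP[/eqP->|zS]; first by case/andP => _ ->; left.
    by move=> zz; right; apply/IH; exists z.
apply: (iffP IH) => [[z zS zz]|[z]]; first by exists z; rewrite // inE zS orbT.
rewrite inE => /orP[/eqP->|zS zz]; first by rewrite yP.
by exists z.
Qed.

Lemma half_rad (a : R) (eta : nat) : 2 * a / 2 ^+ eta.+1 = a / 2 ^+ eta.
Proof. by rewrite exprS invfM mulrA [2 * a]mulrC mulfK // pnatr_eq0. Qed.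

Definition inv (eta : nat) (rj : R) (S : seq (V * {set V})) : Prop :=
 [/\ uniq (map fst S),
     forall x : V * {set V}, x \in S -> x.1 \in x.2,
     forall (x y : V * {set V}) u, x \in S -> y \in S -> u \in x.2 -> u \in y.2 -> x = y,
     (forall u, exists2 x : V * {set V}, x \in S & u \in x.2) &
     [/\ forall (x : V * {set V}) u, x \in S -> u \in x.2 -> d u x.1 < rj / 2 &
         forall x y : V * {set V}, x \in S -> y \in S -> x != y -> rj / 2 ^+ eta <= d x.1 y.1]].

Lemma step_props eta rj rj' S S' :
  0 < rj' -> rj / 2 + rj' / 2 ^+ eta <= rj' / 2 ->
  inv eta rj S -> hier_step d eta (2 * rj') S S' ->
  [/\ inv eta rj' S',
      (forall B, B \in level_sets S -> exists2 C, C \in level_sets S' & B \subset C) &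
      (#|level_sets S' :\: level_sets S| + size S' <= size S)%N].
Proof.
move=> rpos arith [I1 I2 I3 I4 [I5 I6]] [G [gr ->]].
have radpos : 0 < 2 * rj' / 2 ^+ eta.+1.
  by rewrite divr_gt0 ?mulr_gt0 ?exprn_gt0.
have [G1 G2 G3 G4 [G5 G6 G7]] := greedy_props radpos gr.
rewrite half_rad in G2 G5.
set F := fun x : V * {set V} => (x.1, \bigcup_(y <- S | y.1 \in x.2) y.2).
have inS' x' : x' \in map F G -> exists2 x, x \in G & x' = F x by move/mapP.
have leadS v : v \in leaders S -> exists2 y, y \in S & y.1 = v.
  by rewrite inE => /mapP [y yS ->]; exists y.
split.
- split.
  + by rewrite -map_comp.
  + move=> _ /inS' [x xG ->] /=; have [x1 x2L _] := G2 x xG.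
    have [y yS ey] := leadS _ (subsetP x2L _ x1).
    by apply/memU; exists y; rewrite // ey x1 /= -ey I2.
  + move=> _ _ u /inS' [x xG ->] /inS' [x' x'G ->] /= /memU [y yS /andP [yx uy]]
      /memU [y' y'S /andP [yx' uy']].
    have eyy := I3 _ _ _ yS y'S uy uy'; rewrite -eyy in yx'.
    by rewrite (G3 _ _ _ xG x'G yx yx').
  + move=> u; have [y yS uy] := I4 u.
    have [x xG yx] : exists2 x, x \in G & y.1 \in x.2.
      by apply: G4; rewrite inE; apply/mapP; exists y.
    by exists (F x); [apply/mapP; exists x | apply/memU; exists y; rewrite ?yx].
  split.
  + move=> _ u /inS' [x xG ->] /= /memU [y yS /andP [yx uy]].
    apply: le_lt_trans (d_tri u y.1 x.1) _.
    apply: lt_le_trans arith; apply: ltrD; first exact: I5.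
    by have [_ _ ->] := G2 x xG.
  + move=> _ _ /inS' [x xG ->] /inS' [x' x'G ->] /= neq.
    apply: G5 => //; apply: contraNneq neq => ->; done.
- move=> B; rewrite inE => /mapP [y yS ->].
  have [x xG yx] : exists2 x, x \in G & y.1 \in x.2.
    by apply: G4; rewrite inE; apply/mapP; exists y.
  exists (F x).2; first by rewrite inE; apply/mapP; exists (F x) => //; apply/mapP; exists x.
  by apply/subsetP => u uy; apply/memU; exists y; rewrite ?yx.
- have sizeS : size S = sumn (map (fun x : V * {set V} => #|x.2|) G).
    by rewrite -G6 /leaders cardsE (card_uniqP I1) size_map.
  have cnt : forall G0 : seq (V * {set V}), (forall x, x \in G0 -> 0 < #|x.2|)%N ->
      (count (fun x : V * {set V} => 1 < #|x.2|)%N G0 + size G0 <=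
        sumn (map (fun x : V * {set V} => #|x.2|) G0))%N.
    elim=> [|x G0 IH] //= H0; rewrite -addnA !addnS -addSn.
    apply: leq_add; last by apply: IH => z zG; apply: H0; rewrite inE zG orbT.
    by have := H0 x (mem_head _ _); case: #|x.2| => [|[|k]].
  rewrite sizeS size_map; apply: leq_trans (cnt G _); last first.
    by move=> x xG; have [x1 _ _] := G2 x xG; apply/card_gt0P; exists x.1.
  rewrite leq_add2r -size_filter -(size_map (fun x => (F x).2)).
  apply: leq_trans (card_size _).
  apply: subset_leq_card; apply/subsetP => B; rewrite !inE => /andP [nB].
  case/mapP => _ /mapP [x xG ->] eB.
  case: (ltnP 1 #|x.2|) => [lt1|le1].
    by apply/mapP; exists x => //; rewrite mem_filter lt1.
  exfalso; move/negP: nB; apply; rewrite eB.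
  have [x1 x2L _] := G2 x xG.
  have [y yS ey] := leadS _ (subsetP x2L _ x1).
  have -> : (F x).2 = y.2.
    apply/setP => u; apply/memU/idP => [[y' y'S /andP [y'x uy']]|uy].
      have e1 : y'.1 = x.1 by move/card_le1_eqP: le1 => /(_ x.1 y'.1 x1 y'x).
      suff -> : y = y' by [].
      by apply: (I3 _ _ y.1 yS y'S); rewrite ?I2 // ey -e1 I2.
    by exists y; rewrite // ey x1.
  by apply/mapP; exists y.
Qed.


Lemma dbl_iter lam : doubling d lam -> forall k v (s : R), 0 < s ->
  exists W : {set V}, (#|W| <= lam ^ k)%N &&
    (ball d (2 ^+ k * s) v \subset \bigcup_(w in W) ball d s w).
Proof.
move=> Hd; elim=> [|k IH] v s spos.
  exists [set v]; rewrite cards1 expn0 leqnn mul1r /=.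
  apply/subsetP => u uv; apply/bigcupP; exists v; first by rewrite inE.
  exact: uv.
have kpos : 0 < 2 ^+ k * s by rewrite mulr_gt0 ?exprn_gt0.
have [W0 [W0c W0s]] := Hd v _ kpos.
pose f w := xchoose (IH w s spos).
exists (\bigcup_(w in W0) f w); apply/andP; split.
  have := @card_bigcup_le _ _ (fun w => w \in W0) f; move/leq_trans; apply.
  have Hf w : (#|f w| <= lam ^ k)%N by case/andP: (xchooseP (IH w s spos)).
  apply: (@leq_trans (\sum_(w in W0) lam ^ k)%N); first by apply: leq_sum => w _; apply: Hf.
  by rewrite sum_nat_const expnS leq_mul2r W0c orbT.
apply/subsetP => u; rewrite exprS -mulrA => /(subsetP W0s) /bigcupP [w wW uw].
have /andP [_ /subsetP /(_ u uw) /bigcupP [w' w'f uw']] := xchooseP (IH w s spos).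
by apply/bigcupP; exists w' => //; apply/bigcupP; exists w.
Qed.

Lemma pack lam k v (s : R) (M : {set V}) : doubling d lam -> 0 < s ->
  M \subset ball d (2 ^+ k * s) v ->
  (forall x y, x \in M -> y \in M -> x != y -> 2 * s <= d x y) ->
  (#|M| <= lam ^ k)%N.
Proof.
move=> Hd spos Ms sep.
have [W /andP [Wc Ws]] := dbl_iter Hd k v spos.
apply: leq_trans Wc.
have : M \subset \bigcup_(w in W) (M :&: ball d s w).
  apply/subsetP => u uM; have /bigcupP [w wW uw] := subsetP Ws _ (subsetP Ms _ uM).
  by apply/bigcupP; exists w; rewrite // inE uM.
move/subset_leq_card/leq_trans; apply.
have := @card_bigcup_le _ _ (fun w => w \in W) (fun w => M :&: ball d s w); move/leq_trans; apply.
rewrite -sum1_card; apply: leq_sum => w _.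
apply/card_le1_eqP => x y; rewrite !inE => /andP [xM xw] /andP [yM yw].
apply/eqP; apply: contraT => neq.
have h1 := sep _ _ yM xM neq.
have h2 : d y x < 2 * s.
  apply: le_lt_trans (d_tri y w x) _.
  by rewrite mulr2n mulrDl mul1r; apply: ltrD => //; rewrite d_sym.
by rewrite ltNge h1 in h2.
Qed.


Lemma pow_s (eta : nat) (rj : R) : 2 ^+ (3 + eta) * (rj / 2 ^+ eta.+1) = 4 * rj.
Proof.
have -> : (3 + eta = 2 + eta.+1)%N by rewrite addSnnS.
by rewrite exprD -mulrA [X in 2 ^+ 2 * X]mulrC divfK ?expf_neq0 ?pnatr_eq0 // -natrX.
Qed.

Lemma knows_bound lam eta rj S A : doubling d lam -> 0 < rj -> inv eta rj S ->
  A \in level_sets S ->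
  (#|[set B in level_sets S | knows d rj A B]| <= lam ^ (3 + eta))%N.
Proof.
move=> Hd rpos [I1 I2 I3 I4 [I5 I6]]; rewrite inE => /mapP [a aS ->].
pose M := [set v | has (fun y : V * {set V} => (y.1 == v) && knows d rj a.2 y.2) S].
pose g v := (nth (v, set0) S (index v (map fst S))).2.
have gE y : y \in S -> g y.1 = y.2.
  move=> yS; rewrite /g; set i := index _ _.
  have iS : (i < size S)%N by rewrite -(size_map fst) index_mem; apply: map_f.
  have zS := mem_nth (y.1, set0) iS.
  have z1 : (nth (y.1, set0) S i).1 = y.1.
    by rewrite -(nth_map _ y.1) // nth_index //; apply: map_f.
  congr (_.2); apply: (I3 _ _ y.1 zS yS); rewrite ?I2 //.
  by rewrite -{1}z1 I2.
apply: (@leq_trans #|g @: M|).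
  apply: subset_leq_card; apply/subsetP => B; rewrite !inE => /andP [/mapP [y yS ->] kn].
  apply/imsetP; exists y.1; last by rewrite gE.
  by rewrite inE; apply/hasP; exists y; rewrite // eqxx.
apply: leq_trans (leq_imset_card _ _) _.
apply: (@pack lam (3 + eta) a.1 (rj / 2 ^+ eta.+1)) => //.
- by rewrite divr_gt0 ?exprn_gt0.
- apply/subsetP => v; rewrite !inE => /hasP [y yS /andP [/eqP ey kn]].
  case/existsP: kn => p /andP [pa /existsP [q /andP [qy pq]]].
  rewrite pow_s -ey.
  apply: le_lt_trans (d_tri y.1 q a.1) _.
  have h1 : d y.1 q < rj / 2 by rewrite d_sym; apply: I5.
  have h2 : d q a.1 < rj + rj / 2.
    apply: le_lt_trans (d_tri q p a.1) _; apply: ltrD; first by rewrite d_sym.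
    exact: I5.
  apply: lt_le_trans (ltrD h1 h2) _.
  rewrite addrCA -splitr -mulr2n -[rj *+ 2]mulr_natl.
  by apply: ler_wpM2r; [exact: ltW | rewrite ler_nat].
- move=> x y; rewrite !inE => /hasP [x' x'S /andP [/eqP ex _]] /hasP [y' y'S /andP [/eqP ey _]] nxy.
  rewrite mulrA half_rad -ex -ey; apply: I6 => //.
  by apply: contraNneq nxy => exy; rewrite -ex -ey exy.
Qed.

End G.
Lemma arith1 (R : realFieldType) (x t a : R) : 0 < x -> 1 < a -> 1 + 1 / (a - 1) <= t ->
  x / 2 + (t * x) / (2 * a) <= (t * x) / 2.
Proof.
move=> xp a1 ht.
have a0 : a != 0 by rewrite gt_eqF // (lt_trans ltr01).
have am : 0 < a - 1 by rewrite subr_gt0.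
have ha : a <= t * (a - 1).
  have : (1 + 1 / (a - 1)) * (a - 1) <= t * (a - 1) by apply: ler_wpM2r => //; exact: ltW.
  by rewrite mulrDl mul1r div1r mulVf ?gt_eqF // subrK.
set c := x / (2 * a).
have cp : 0 <= c by rewrite /c ltW // divr_gt0 // mulr_gt0 // (lt_trans ltr01).
have e1 : x / 2 = c * a by rewrite /c invfM mulrA divfK.
have e2 : (t * x) / (2 * a) = c * t by rewrite /c [t * x]mulrC mulrAC.
have e3 : (t * x) / 2 = c * (t * a) by rewrite -mulrA e1 mulrCA.
rewrite e1 e2 e3 -mulrDr; apply: ler_wpM2l => //.
by rewrite -lerBrDr -[X in _ - X]mulr1 -mulrBr.
Qed.

Unset Implicit Arguments.

Theorem corollary1 (R : realFieldType) (V : finType) (d : V -> V -> R)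
    (lam eta : nat) (tau r0 : R) (H : seq (seq (V * {set V}))) :
  is_metric d ->
  (2 <= #|V|)%N ->
  doubling d lam ->
  (2 <= eta)%N ->
  1 + 1 / (2 ^+ eta.-1 - 1) <= tau ->
  tau <= 2 ^+ eta ->
  0 < r0 ->
  (forall u v : V, u != v -> r0 < d u v) ->
  hier_run d eta tau r0 H ->
  (#|all_sets H| <= 2 * #|V| - 1)%N /\
  (#|knowing_pairs d tau r0 H| <= (2 * #|V| - 1) * lam ^ (3 + eta))%N.
Proof.
move=> dm nV Hd eta2 htau _ r0p sepV [H0 HS0 Hstep Hlast].
set S := fun j => nth [::] H j.
set r := radius tau r0.
have a1 : 1 < (2 : R) ^+ eta.-1.
  by rewrite -natrX ltr1n -{1}(expn0 2) ltn_exp2l // -ltnS prednK // ltnW.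
have e2 : (2 : R) ^+ eta = 2 * 2 ^+ eta.-1.
  by rewrite -exprS prednK // ltnW.
have tau1 : 1 <= tau.
  apply: le_trans htau; rewrite lerDl divr_ge0 ?ler01 // subr_ge0 ltW //.
have taup : 0 < tau by apply: lt_le_trans tau1.
have rpos j : 0 < r j by rewrite /r /radius mulr_gt0 // exprn_gt0.
have rmono j k : (j <= k)%N -> r j <= r k.
  move=> jk; rewrite /r /radius; apply: ler_wpM2r; first exact: ltW.
  by rewrite -(subnKC jk) exprD ler_peMr ?exprn_ege1 // exprn_ge0 // ltW.
have rar j : r j / 2 + r j.+1 / 2 ^+ eta <= r j.+1 / 2.
  by move: (arith1 (rpos j) a1 htau); rewrite /r /radius exprS e2 !mulrA.
have inv0 : inv d eta (r 0) (S 0).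
  have r00 : r 0 = r0 by rewrite /r /radius expr0 mul1r.
  rewrite /S HS0 r00.
  have mS : forall x : V * {set V}, x \in [seq (v, [set v]) | v <- enum V] -> x = (x.1, [set x.1]).
    by move=> x /mapP [v _ ->].
  split.
  - have -> : [seq i.1 | i <- [seq (v, [set v]) | v <- enum V]] = enum V.
      by elim: (enum V) => //= v s ->.
    exact: enum_uniq.
  - by move=> x /mS ->; rewrite set11.
  - move=> [v B] [w C] u /mS [->] /mS [->] /= /set1P <- /set1P <-.
    by [].
  - move=> u; exists (u, [set u]); last by rewrite set11.
    by apply/mapP; exists u; rewrite ?mem_enum.
  split.
  - move=> x u /mS ex; rewrite ex /= => /set1P ->; rewrite (d_refl dm).
    by rewrite divr_gt0.
  - move=> x y /mS ex /mS ey nxy.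
    have n1 : x.1 != y.1 by apply: contraNneq nxy => e; rewrite ex ey e.
    apply: le_trans (ltW (sepV _ _ n1)).
    rewrite ler_pdivrMr ?exprn_gt0 // ler_peMr ?ltW //.
    by rewrite -natrX ltr1n -{1}(expn0 2) ltn_exp2l // ltnW.
have invj : forall j, (j < size H)%N -> inv d eta (r j) (S j).
  elim=> [//|j IH] jlt.
  have [_ st] := Hstep j jlt.
  by have [] := step_props dm (rpos j.+1) (rar j) (IH (ltnW jlt)) st.
have refine : forall i k, (i <= k)%N -> (k < size H)%N -> forall B,
    B \in level_sets (S i) -> exists2 C, C \in level_sets (S k) & B \subset C.
  move=> i; elim=> [|k IH] ik klt B BS.
    by move: ik BS; rewrite leqn0 => /eqP ->; exists B.
  move: ik; rewrite leq_eqVlt => /orP [/eqP ei|ik]; first by rewrite -ei; exists B.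
  have [C CS BC] := IH ik (ltnW klt) B BS.
  have [_ st] := Hstep k klt.
  have [_ ref _] := step_props dm (rpos k.+1) (rar k) (invj k (ltnW klt)) st.
  have [C' C'S CC'] := ref C CS.
  by exists C' => //; apply: subset_trans BC CC'.
have lsP j B : B \in level_sets (S j) -> exists2 y, y \in S j & B = y.2.
  by rewrite inE => /mapP [y yS ->]; exists y.
have disj j B C u : (j < size H)%N -> B \in level_sets (S j) -> C \in level_sets (S j) ->
    u \in B -> u \in C -> B = C.
  move=> jlt /lsP [y yS ->] /lsP [z zS ->] uy uz.
  have [_ _ I3 _ _] := invj j jlt.
  by rewrite (I3 _ _ _ yS zS uy uz).
have nonemp j B : (j < size H)%N -> B \in level_sets (S j) -> exists u, u \in B.
  move=> jlt /lsP [y yS ->]; have [_ I2 _ _ _] := invj j jlt.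
  by exists y.1; apply: I2.
have part1 : forall m, (m < size H)%N ->
    (#|\bigcup_(j < m.+1) level_sets (S j)| + size (S m) <= 2 * #|V|)%N.
  elim=> [|m IH] mlt.
    rewrite big_ord1 /S HS0 size_map -cardE mul2n -addnn leq_add2r.
    rewrite /level_sets cardsE; apply: leq_trans (card_size _) _.
    by rewrite !size_map cardT enumT.
  rewrite big_ord_recr /=.
  set X := \bigcup_(j < m.+1) level_sets (S j).
  have [_ st] := Hstep m mlt.
  have [_ _ cnt] := step_props dm (rpos m.+1) (rar m) (invj m (ltnW mlt)) st.
  have sub : level_sets (S m) \subset X.
    by rewrite /X; apply: (bigcup_sup (@ord_max m)).
  have le1 : (#|X :|: level_sets (S m.+1)| <= #|X| + #|level_sets (S m.+1) :\: level_sets (S m)|)%N.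
    apply: leq_trans (leq_card_setU _ _).1; apply: subset_leq_card.
    apply/subsetP => B; rewrite in_setU => /orP [BX|BY]; rewrite in_setU ?BX //.
    case BZ : (B \in level_sets (S m)); first by rewrite (subsetP sub _ BZ).
    by rewrite in_setD BZ BY orbT.
  apply: leq_trans (leq_add le1 (leqnn _)) _.
  rewrite -addnA; apply: leq_trans (leq_add (leqnn _) cnt) _.
  exact: IH (ltnW mlt).
have P1 : (#|all_sets H| <= 2 * #|V| - 1)%N.
  have := part1 _ (etrans (ltn_predL _) H0); rewrite prednK // /S Hlast.
  rewrite subn1 addn1; case: (2 * #|V|)%N => //.
split; first exact: P1.
pose PA A := [pred j : 'I_(size H) | A \in level_sets (S j)].
pose Lst A := \max_(j in PA A) (j : nat).
have Lstge A j : (j < size H)%N -> A \in level_sets (S j) -> (j <= Lst A)%N.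
  move=> jlt Aj.
  exact: (@leq_bigmax_cond _ (fun i => i \in PA A) (fun i : 'I_(size H) => (i : nat)) (Ordinal jlt)).
have LstP A : A \in all_sets H -> (Lst A < size H)%N /\ A \in level_sets (S (Lst A)).
  move=> /bigcupP [j _ Aj].
  have : (0 < #|PA A|)%N by apply/card_gt0P; exists j.
  move/(eq_bigmax_cond (fun i : 'I_(size H) => (i : nat))) => [i0 Ai0 e].
  by rewrite /Lst e; split; [exact: ltn_ord | exact: Ai0].
pose N A := [set B in level_sets (S (Lst A)) | knows d (r (Lst A)) A B].
have Nb A : A \in all_sets H -> (#|N A| <= lam ^ (3 + eta))%N.
  move=> /LstP [lt AL].
  exact: (knows_bound dm Hd (rpos _) (invj _ lt) AL).
have kn_sym rr A B : knows d rr A B -> knows d rr B A.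
  case/existsP => v /andP [vA /existsP [u /andP [uB duv]]].
  apply/existsP; exists u; rewrite uB /=; apply/existsP; exists v.
  by rewrite vA (d_sym dm).
have kn_mono j k A B : (j <= k)%N -> knows d (r j) A B -> knows d (r k) A B.
  move=> jk /existsP [v /andP [vA /existsP [u /andP [uB duv]]]].
  apply/existsP; exists v; rewrite vA /=; apply/existsP; exists u.
  by rewrite uB /=; apply: lt_le_trans duv (rmono _ _ jk).
have claim A B j : (j < size H)%N -> A \in level_sets (S j) -> B \in level_sets (S j) ->
    knows d (r j) A B -> (Lst A <= Lst B)%N ->
    [set A; B] \in \bigcup_(A0 in all_sets H) [set [set A0; B0] | B0 in N A0].
  move=> jlt Aj Bj kn le.
  have Aall : A \in all_sets H by apply/bigcupP; exists (Ordinal jlt).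
  have Ball : B \in all_sets H by apply/bigcupP; exists (Ordinal jlt).
  have [kA AL] := LstP A Aall.
  have [kB BL] := LstP B Ball.
  have jk := Lstge A j jlt Aj.
  have [C CS BC] := refine j (Lst A) jk kA B Bj.
  have [C' C'S CC'] := refine (Lst A) (Lst B) le kB C CS.
  have [u uB] := nonemp j B jlt Bj.
  have eB : B = C'.
    by apply: (disj (Lst B) B C' u kB BL C'S uB); apply: (subsetP CC'); apply: (subsetP BC).
  have eC : C = B by apply/eqP; rewrite eqEsubset BC andbT eB.
  apply/bigcupP; exists A => //; apply/imsetP; exists B => //.
  by rewrite inE -{1}eC CS /=; apply: kn_mono jk kn.
apply: (@leq_trans #|\bigcup_(A0 in all_sets H) [set [set A0; B0] | B0 in N A0]|).
  apply: subset_leq_card; apply/subsetP => AB; rewrite inE.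
  case/existsP => A /existsP [B /and3P [_ /eqP -> /hasP [j]]].
  rewrite mem_iota add0n => /andP [_ jlt] /and3P [Aj Bj kn].
  case: (leqP (Lst A) (Lst B)) => le; first exact: claim kn le.
  rewrite setUC; apply: (claim B A j jlt Bj Aj (kn_sym _ _ _ kn)); exact: ltnW.
have := @card_bigcup_le _ _ (fun A0 => A0 \in all_sets H) (fun A0 => [set [set A0; B0] | B0 in N A0]).
move/leq_trans; apply.
apply: (@leq_trans (\sum_(A0 in all_sets H) lam ^ (3 + eta))%N).
  by apply: leq_sum => A0 A0in; apply: leq_trans (leq_imset_card _ _) (Nb A0 A0in).
by rewrite sum_nat_const leq_mul2r P1 orbT.
Qed.
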